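(* For an $E$-linear code $C$ of length $2n$: (1) $(C^{\perp_{S_L}})_{Res}=(C_{Res})^{\perp_S}=(C^{\perp_{S_L}})_{Tor}$; (2) $(C^{\perp_{S_R}})_{Res}=(C_{Tor})^{\perp_S}$ and $(C^{\perp_{S_R}})_{Tor}=\mathbb{F}_2^{2n}$; (3) $(C^{\perp_S})_{Res}=(C_{Tor})^{\perp_S}$ and $(C^{\perp_S})_{Tor}=(C_{Res})^{\perp_S}$.
   Context: $E=\langle \kappa,\tau \mid 2\kappa=2\tau=0,\ \kappa^2=\kappa,\ \tau^2=\tau,\ \kappa\tau=\kappa,\ \tau\kappa=\tau\rangle$ is the non-unital ring $\{0,\kappa,\tau,\zeta\}$, $\zeta=\kappa+\tau$, with $e\kappa=e\tau=e$, $e\zeta=0$ for all $e\in E$. Every $e\in E$ is uniquely $u\kappa+v\zeta$ ($u,v\in\mathbb{F}_2$); $\pi(u\kappa+v\zeta)=u$, componentwise. For $v\in\mathbb{F}_2^m$ and $e\in E$, $ev=(ev_1,\dots,ev_m)$ with $0\cdot e=0$, $1\cdot e=e$. An $E$-linear code of length $2n$ is a left $E$-submodule $C\subseteq E^{2n}$; $C_{Res}=\pi(C)$, $C_{Tor}=\{v\in\mathbb{F}_2^{2n}:\zeta v\in C\}$. Symplectic inner product (over $E$ or $\mathbb{F}_2$): $\langle (u|v),(u'|v')\rangle_s=\sum_i u_iv'_i+\sum_i v_iu'_i$, halves of length $n$. For binary $B$, $B^{\perp_S}=\{z\in\mathbb{F}_2^{2n}:\langle z,w\rangle_s=0\ \forall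 w\in B\}$. For $E$-linear $C$: $C^{\perp_{S_L}}=\{z\in E^{2n}:\langle z,w\rangle_s=0\ \forall w\in C\}$, $C^{\perp_{S_R}}=\{z\in E^{2n}:\langle w,z\rangle_s=0\ \forall w\in C\}$, $C^{\perp_S}=C^{\perp_{S_L}}\cap C^{\perp_{S_R}}$. *)

(* Defs.v *)
From HB Require Import structures.
From mathcomp Require Import all_boot all_algebra.
Set Implicit Arguments. Unset Strict Implicit. Unset Printing Implicit Defensive.
Import GRing.Theory.
Local Open Scope ring_scope.

(* The ring E = {0, kappa, tau, zeta}: an element u*kappa + v*zeta (u v : F_2)
   is represented by the pair (u, v).  Addition is componentwise. *)
Definition E := ('F_2 * 'F_2)%type.

Definition kappa : E := (1, 0).
Definition zeta  : E := (0, 1).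
Definition tau   : E := (1, 1).

Definition piE (e : E) : 'F_2 := e.1.

(* Multiplication in E: x * y = pi(y) x  (since e kappa = e tau = e, e zeta = 0). *)
Definition Emul (x y : E) : E := (x.1 * y.1, x.2 * y.1).

Definition bitE (b : 'F_2) (e : E) : E := (b * e.1, b * e.2).

Definition Eword m := {ffun 'I_m -> E}.
Definition Bword m := {ffun 'I_m -> 'F_2}.

Definition Escale m (e : E) (c : Eword m) : Eword m := [ffun i => Emul e (c i)].

Definition bscale m (e : E) (v : Bword m) : Eword m := [ffun i => bitE (v i) e].

Definition piV m (c : Eword m) : Bword m := [ffun i => piE (c i)].

Definition Elinear m (C : {set Eword m}) : Prop :=
  [/\ (0 : Eword m) \in C,
      (forall x y, x \in C -> y \in C -> x + y \in C) &
      (forall (e : E) x, x \in C -> Escale e x \in C)].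

Definition Res m (C : {set Eword m}) : {set Bword m} := [set piV c | c in C].
Definition Tor m (C : {set Eword m}) : {set Bword m} :=
  [set v | bscale zeta v \in C].

Definition sympF n (x y : Bword (n + n)) : 'F_2 :=
  \sum_(i < n) (x (lshift n i) * y (rshift n i) + x (rshift n i) * y (lshift n i)).

Definition sympE n (x y : Eword (n + n)) : E :=
  \sum_(i < n) (Emul (x (lshift n i)) (y (rshift n i))
                + Emul (x (rshift n i)) (y (lshift n i))).

Definition perpS n (B : {set Bword (n + n)}) : {set Bword (n + n)} :=
  [set z | [forall w in B, sympF z w == 0]].

Definition perpSL n (C : {set Eword (n + n)}) : {set Eword (n + n)} :=
  [set z | [forall w in C, sympE z w == 0]].
Definition perpSR n (C : {set Eword (n + n)}) : {set Eword (n + n)} :=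
  [set z | [forall w in C, sympE w z == 0]].
Definition perpSE n (C : {set Eword (n + n)}) : {set Eword (n + n)} :=
  perpSL C :&: perpSR C.

(* Main.v *)
Require Import Defs.
From mathcomp Require Import all_boot all_algebra.
Import GRing.Theory.
Local Open Scope ring_scope.
Set Implicit Arguments. Unset Strict Implicit.
Lemma F2xx (a : 'F_2) : a + a = 0.
Proof. by apply: addrr_pchar2; apply: pchar_Fp. Qed.
Lemma sumfst (I : Type) (r : seq I) (P : pred I) (F : I -> E) :
  (\sum_(i <- r | P i) F i).1 = \sum_(i <- r | P i) (F i).1.
Proof. by apply: (big_morph fst) => //. Qed.
Lemma sumsnd (I : Type) (r : seq I) (P : pred I) (F : I -> E) :
  (\sum_(i <- r | P i) F i).2 = \sum_(i <- r | P i) (F i).2.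
Proof. by apply: (big_morph snd) => //. Qed.

Definition sndV m (c : Eword m) : Bword m := [ffun i => (c i).2].
Definition mkE m (x y : Bword m) : Eword m := [ffun i => (x i, y i)].

Lemma piV_mk m (x y : Bword m) : piV (mkE x y) = x.
Proof. by apply/ffunP => i; rewrite !ffunE. Qed.
Lemma sndV_mk m (x y : Bword m) : sndV (mkE x y) = y.
Proof. by apply/ffunP => i; rewrite !ffunE. Qed.

Lemma sympE_split n (z w : Eword (n + n)) :
  sympE z w = (sympF (piV z) (piV w), sympF (sndV z) (piV w)).
Proof.
rewrite /sympE /sympF [LHS]surjective_pairing sumfst sumsnd.
by congr (_, _); apply: eq_bigr => i _; rewrite !ffunE.
Qed.

Lemma sympF0 n (y : Bword (n + n)) : sympF 0 y = 0.
Proof. by rewrite /sympF big1 // => i _; rewrite !ffunE !mul0r addr0. Qed.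

Lemma sympFC n (x y : Bword (n + n)) : sympF x y = sympF y x.
Proof. by apply: eq_bigr => i _; rewrite addrC (mulrC (x (lshift n i))) (mulrC (x (rshift n i))). Qed.

Lemma bscale_zeta m (v : Bword m) : bscale zeta v = mkE 0 v.
Proof. by apply/ffunP => i; rewrite !ffunE /bitE /= mulr0 mulr1. Qed.

Lemma inSL n (C : {set Eword (n + n)}) z :
  (z \in perpSL C) = [forall w in C, (sympF (piV z) (piV w) == 0) && (sympF (sndV z) (piV w) == 0)].
Proof.
rewrite inE; apply: eq_forallb => w; rewrite sympE_split.
by rewrite -pair_eqE.
Qed.

Lemma inSR n (C : {set Eword (n + n)}) z :
  (z \in perpSR C) = [forall w in C, (sympF (piV w) (piV z) == 0) && (sympF (sndV w) (piV z) == 0)].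
Proof.
rewrite inE; apply: eq_forallb => w; rewrite sympE_split.
by rewrite -pair_eqE.
Qed.

Lemma inTor m (C : {set Eword m}) v : (v \in Tor C) = (mkE 0 v \in C).
Proof. by rewrite inE bscale_zeta. Qed.

Lemma piV_Tor m (C : {set Eword m}) w : Elinear C -> w \in C -> piV w \in Tor C.
Proof.
case=> _ _ HS wC; rewrite inTor.
have -> : mkE 0 (piV w) = Escale zeta w.
  by apply/ffunP => i; rewrite !ffunE /Emul /= mul0r mul1r.
exact: HS.
Qed.

Lemma sndV_Tor m (C : {set Eword m}) w : Elinear C -> w \in C -> sndV w \in Tor C.
Proof.
case=> _ HD HS wC; rewrite inTor.
have -> : mkE 0 (sndV w) = w + Escale kappa w.
  apply/ffunP => i; rewrite !ffunE /Emul /= mul1r mul0r.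
  by case: (w i) => a b; apply: (@eq_trans _ _ (a + a, b + 0)); [rewrite F2xx addr0 | ].
exact: (HD _ _ wC (HS _ _ wC)).
Qed.

Lemma inPerpRes n (C : {set Eword (n + n)}) x :
  (x \in perpS (Res C)) = [forall w in C, sympF x (piV w) == 0].
Proof.
rewrite inE; apply/forall_inP/forall_inP => H w.
- by move=> wC; apply: H; apply/imsetP; exists w.
- by case/imsetP => c cC ->; apply: H.
Qed.

Lemma inPerpTor n (C : {set Eword (n + n)}) x : Elinear C ->
  (x \in perpS (Tor C)) = [forall w in C, (sympF (piV w) x == 0) && (sympF (sndV w) x == 0)].
Proof.
move=> HL; rewrite inE; apply/forall_inP/forall_inP => H w.
- move=> wC; rewrite sympFC (sympFC (sndV w)).
  by rewrite !H //; [apply: sndV_Tor | apply: piV_Tor].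
- rewrite inTor => /H /andP [_]; by rewrite sndV_mk sympFC.
Qed.

Theorem mainTheorem5 (n : nat) (C : {set Eword (n + n)}) :
  Elinear C ->
  [/\ Res (perpSL C) = perpS (Res C) /\ perpS (Res C) = Tor (perpSL C),
      Res (perpSR C) = perpS (Tor C) /\ Tor (perpSR C) = [set: Bword (n + n)] &
      Res (perpSE C) = perpS (Tor C) /\ Tor (perpSE C) = perpS (Res C)].
Proof.
move=> HL.
have RsubT w : w \in C -> piV w \in Tor C by move=> wC; apply: piV_Tor.
split; (split; apply/setP => x).
- rewrite inPerpRes; apply/imsetP/forall_inP.
  + case=> z; rewrite inSL => /forall_inP zin -> w wC.
    by case/andP: (zin w wC).
  + move=> H; exists (mkE x 0); last by rewrite piV_mk.
    rewrite inSL; apply/forall_inP => w wC.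
    by rewrite piV_mk sndV_mk sympF0 eqxx andbT H.
- rewrite inPerpRes inTor inSL piV_mk sndV_mk.
  apply/forall_inP/forall_inP => H w wC.
  + by rewrite sympF0 eqxx H.
  + by case/andP: (H w wC).
- rewrite inPerpTor //; apply/imsetP/forall_inP.
  + case=> z; rewrite inSR => /forall_inP zin -> w wC.
    exact: zin.
  + move=> H; exists (mkE x 0); last by rewrite piV_mk.
    by rewrite inSR; apply/forall_inP => w wC; rewrite piV_mk H.
- rewrite inTor inSR piV_mk in_setT; apply/forall_inP => w wC.
  by rewrite sympFC sympF0 (sympFC _ 0) sympF0 eqxx.
- rewrite inPerpTor //; apply/imsetP/forall_inP.
  + case=> z; rewrite in_setI inSR => /andP [_ /forall_inP zin] -> w wC.
    exact: zin.
  + move=> H; exists (mkE x 0); last by rewrite piV_mk.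
    rewrite in_setI inSL inSR; apply/andP; split; apply/forall_inP => w wC;
      rewrite piV_mk ?sndV_mk ?sympF0 ?eqxx ?andbT ?H //.
    case/andP: (H w wC) => /eqP <- _; rewrite sympFC; exact: eqxx.
- rewrite inPerpRes inTor in_setI inSL inSR piV_mk sndV_mk.
  apply/andP/forall_inP.
  + by case=> /forall_inP H _ w wC; case/andP: (H w wC).
  + move=> H; split; apply/forall_inP => w wC.
    * by rewrite sympF0 eqxx H.
    * by rewrite !(sympFC _ 0) !sympF0 eqxx.
Qed.
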